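(* For all natural numbers $t\ge 6$ and $s\ge 5$, $\mathrm{toi}(K_{2t}\times K_s)\ge ts$.
   Context: All graphs are finite, simple and loopless. A graph $G$ contains a graph $F$ as a totally odd strong immersion if there is an injective map $\varphi\colon V(F)\to V(G)$ (terminals) and, for every edge $uv\in E(F)$, a path $P_{uv}$ in $G$ with endpoints $\varphi(u),\varphi(v)$, such that the paths are pairwise edge-disjoint, no terminal is an interior vertex of any of them, and every $P_{uv}$ has odd length. $\mathrm{toi}(G)$ is the maximum $t$ such that $G$ contains $K_t$ as a totally odd strong immersion. The direct product $G\times H$ has vertex set $V(G)\times V(H)$, with $(g_1,h_1)\sim(g_2,h_2)$ iff $g_1g_2\in E(G)$ and $h_1h_2\in E(H)$. *)

(* Defs.v *)
From mathcomp Require Import all_boot.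
Set Implicit Arguments. Unset Strict Implicit. Unset Printing Implicit Defensive.

Definition simple_graph (V : finType) (adj : rel V) : Prop :=
  symmetric adj /\ irreflexive adj.

(* A path in G: start vertex x followed by sequence p of further vertices,
   consecutive vertices adjacent, all vertices distinct. Its endpoints are
   x and last x p, its length is size p, its interior vertices are belast of p. *)
Definition is_path (V : finType) (adj : rel V) (x : V) (p : seq V) : bool :=
  path adj x p && uniq (x :: p).

Definition walk_edges (V : finType) (x : V) (p : seq V) : seq (V * V) :=
  zip (x :: p) p.

Definition edge_disjoint (V : finType) (x : V) (p : seq V) (y : V) (q : seq V) : bool :=
  all (fun e => ((e.1, e.2) \notin walk_edges y q) && ((e.2, e.1) \notin walk_edges y q))
      (walk_edges x p).

Definition interior (V : finType) (x : V) (p : seq V) : seq V := behead (belast x p).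

(* G contains K_t as a totally odd strong immersion: terminals phi (injective)
   and for every pair i < j of vertices of K_t an odd-length path
   from phi i to phi j, pairwise edge-disjoint, avoiding terminals in interiors. *)
Definition toi_immersion (V : finType) (adj : rel V) (t : nat) : Prop :=
  exists (phi : 'I_t -> V) (P : 'I_t -> 'I_t -> seq V),
    injective phi /\
    (forall i j : 'I_t, i < j ->
       [/\ is_path adj (phi i) (P i j),
           last (phi i) (P i j) = phi j,
           odd (size (P i j)) &
           forall k : 'I_t, phi k \notin interior (phi i) (P i j)]) /\
    (forall i j k l : 'I_t, i < j -> k < l -> (i, j) != (k, l) ->
       edge_disjoint (phi i) (P i j) (phi k) (P k l)).

Definition toi_ge (V : finType) (adj : rel V) (m : nat) : Prop :=
  exists t, m <= t /\ toi_immersion adj t.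

Definition K_adj (n : nat) : rel 'I_n := fun a b => a != b.

Definition dprod_adj (U W : finType) (a : rel U) (b : rel W) : rel (U * W) :=
  fun x y => a x.1 y.1 && b x.2 y.2.

(* Main.v *)
Require Import Defs.
From mathcomp Require Import all_boot zify.
Set Implicit Arguments. Unset Strict Implicit. Unset Printing Implicit Defensive.

Definition sc (s c : nat) := if c.+1 < s then c.+1 else 0.
Definition pc (s c : nat) := if 0 < c then c.-1 else s.-1.

Definition decTN (s a c r d : nat) : nat*nat*nat*nat :=
  if (a < r) && (d == sc s c) then (a,c,r,c)
  else if (r < a) && (d == pc s c) then (r,c,a,c)
  else (a, minn c d, a, maxn c d).

Definition decNN (t s p x q y : nat) : nat*nat*nat*nat :=
  if (q < p) && (x == sc s (sc s y)) then (q, pc s x, p, pc s x)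
  else if (p < q) && (y == sc s (sc s x)) then (p, pc s y, q, pc s y)
  else let a := if q == sc t p then p else q in (a, minn x y, a, maxn x y).

Definition dec (t s r1 c1 r2 c2 : nat) : nat*nat*nat*nat :=
  if r1 < t then
    if r2 < t then (if (r1 < r2) || ((r1 == r2) && (c1 < c2)) then (r1,c1,r2,c2) else (r2,c2,r1,c1))
    else decTN s r1 c1 (r2 - t) c2
  else if r2 < t then decTN s r2 c2 (r1 - t) c1
  else decNN t s (r1 - t) c1 (r2 - t) c2.

Definition NP (t s a b a' b' : nat) : seq (nat*nat) :=
  if a == a' then
    (if (a.+1 < t) == (b' - b <= s - 3) then [:: (t+a, b'); (t + sc t a, b); (a, b')]
     else [:: (t + sc t a, b'); (t+a, b); (a,b')])
  else if b == b' then [:: (t+a', sc s b); (t+a, pc s b); (a', b)]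
  else [:: (a', b')].

Ltac split_ifs := repeat match goal with |- context [if ?b then _ else _] =>
   lazymatch b with context [if _ then _ else _] => fail | _ => let E := fresh "E" in destruct b eqn:E end end.
Ltac scs := rewrite /sc /pc; split_ifs; lia.

Lemma dec_TN t s a c r d : a < t -> dec t s a c (t + r) d = decTN s a c r d.
Proof. move=> h; rewrite /dec h ifF ?addKn //; apply/negbTE; lia. Qed.
Lemma dec_NT t s a c r d : a < t -> dec t s (t + r) d a c = decTN s a c r d.
Proof. move=> h; rewrite /dec h ifF ?addKn //; apply/negbTE; lia. Qed.
Lemma dec_NN t s p x q y : dec t s (t + p) x (t + q) y = decNN t s p x q y.
Proof. rewrite /dec !ifF ?addKn //; apply/negbTE; lia. Qed.

Lemma sc_pc s c : c < s -> sc s (pc s c) = c. Proof. scs. Qed.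
Lemma pc_sc s c : c < s -> pc s (sc s c) = c. Proof. scs. Qed.

Lemma decTN_1 s a c r : a < r -> decTN s a c r (sc s c) = (a,c,r,c).
Proof. by move=> h; rewrite /decTN h eqxx. Qed.
Lemma decTN_2 s a c r : r < a -> decTN s a c r (pc s c) = (r,c,a,c).
Proof. move=> h; rewrite /decTN h eqxx ifF //; apply/negbTE; lia. Qed.
Lemma decTN_3 s a c r d : ~~ ((a < r) && (d == sc s c)) -> ~~ ((r < a) && (d == pc s c)) ->
  decTN s a c r d = (a, minn c d, a, maxn c d).
Proof. by move=> /negbTE h1 /negbTE h2; rewrite /decTN h1 h2. Qed.
Lemma decNN_1 t s a a' b : a < a' -> b < s -> decNN t s a' (sc s b) a (pc s b) = (a,b,a',b).
Proof. move=> h hb; rewrite /decNN h sc_pc // eqxx /= pc_sc //. Qed.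
Lemma decNN_2 t s a a' b : a < a' -> b < s -> decNN t s a (pc s b) a' (sc s b) = (a,b,a',b).
Proof. move=> h hb; rewrite /decNN h sc_pc // eqxx ifF /= ?pc_sc //; apply/negbTE; lia. Qed.
Lemma decNN_3 t s p x q y : ~~ ((q < p) && (x == sc s (sc s y))) -> ~~ ((p < q) && (y == sc s (sc s x))) ->
  decNN t s p x q y = (if q == sc t p then p else q, minn x y, if q == sc t p then p else q, maxn x y).
Proof. by move=> /negbTE h1 /negbTE h2; rewrite /decNN h1 h2. Qed.

Definition inr t s (v : nat*nat) := (v.1 < 2*t) && (v.2 < s).
Definition nadj (u v : nat*nat) := (u.1 != v.1) && (u.2 != v.2).
Definition keyok_def t s a b a' b' (e : (nat*nat)*(nat*nat)) :=
  (dec t s e.1.1 e.1.2 e.2.1 e.2.2 == (a,b,a',b')) && (dec t s e.2.1 e.2.2 e.1.1 e.1.2 == (a,b,a',b')).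
Fact keyok_key : unit. Proof. exact: tt. Qed.
Definition keyok := locked_with keyok_key keyok_def.

Lemma keyokE t s a b a' b' r1 c1 r2 c2 :
  keyok t s a b a' b' ((r1, c1), (r2, c2)) =
  (dec t s r1 c1 r2 c2 == (a,b,a',b')) && (dec t s r2 c2 r1 c1 == (a,b,a',b')).
Proof. by rewrite /keyok unlock. Qed.

Ltac decfin := rewrite ?dec_NN ?dec_NT ?dec_TN //;
  first [ rewrite decTN_1; [|done] | rewrite decTN_2; [|done] | rewrite decNN_1; [|done|done]
        | rewrite decNN_2; [|done|done] | rewrite decTN_3; [|scs|scs] | rewrite decNN_3; [|scs|scs]
        | rewrite /dec ];
  rewrite /sc; split_ifs; rewrite /=; try (apply/eqP; rewrite /= ?xpair_eqE); lia.

Ltac simplfin := rewrite /= ?inE ?xpair_eqE /sc /pc; split_ifs; lia.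

Ltac allfin := (repeat split) => //=; rewrite /inr /nadj /=;
    repeat (apply/andP; split); try (rewrite keyokE; apply/andP; split; apply/eqP; decfin); try simplfin.

Lemma NP_spec t s a b a' b' : 3 <= t -> 5 <= s -> a < t -> a' < t -> b < s -> b' < s ->
  (a < a') || ((a == a') && (b < b')) ->
  let p := NP t s a b a' b' in
  path nadj (a,b) p /\ uniq ((a,b)::p) /\ last (a,b) p = (a',b') /\ odd (size p) /\ all (inr t s) p /\
     all (fun v => t <= v.1) (behead (belast (a,b) p)) /\
     all (keyok t s a b a' b') (zip ((a,b)::p) p).
Proof.
move=> ht hs ha ha' hb hb' hlex p; rewrite /p /NP.
have [Ea|hneq] := eqVneq a a'.
  subst a'; move: hlex; rewrite ltnn eqxx /= => hbb.
  case: ifP => hg; allfin.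
have [Eb|hbb'] := eqVneq b b'.
  subst b'; have haa : a < a' by lia.
  allfin.
have haa : a < a' by lia.
allfin.
Qed.

Definition vn (n m : nat) (v : 'I_n * 'I_m) : nat*nat := (nat_of_ord v.1, nat_of_ord v.2).
Definition toV (n m : nat) (d : 'I_n * 'I_m) (x : nat*nat) : 'I_n * 'I_m :=
  (insubd d.1 x.1, insubd d.2 x.2).

Lemma vn_toV n m (d : 'I_n * 'I_m) x : (x.1 < n) && (x.2 < m) -> vn (toV d x) = x.
Proof. by case: x => x1 x2 /andP[h1 h2]; rewrite /vn /toV /= !val_insubd h1 h2. Qed.

Lemma vn_inj n m : injective (@vn n m).
Proof. by move=> [x1 x2] [y1 y2]; rewrite /vn /= => -[/ord_inj -> /ord_inj ->]. Qed.

Lemma adjE n m (u v : 'I_n * 'I_m) : dprod_adj (@K_adj n) (@K_adj m) u v = nadj (vn u) (vn v).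
Proof. by []. Qed.

Lemma zip_map2 (T U : Type) (f : T -> U) (x : T) (p : seq T) :
  zip (f x :: map f p) (map f p) = map (fun e => (f e.1, f e.2)) (zip (x :: p) p).
Proof. by elim: p x => [|y p IH] x //=; rewrite IH. Qed.

Lemma mem_zip2 (T1 T2 : eqType) (s1 : seq T1) (s2 : seq T2) u v :
  (u, v) \in zip s1 s2 -> (u \in s1) && (v \in s2).
Proof.
elim: s1 s2 => [|x s1 IH] [|y s2] //=; rewrite inE => /orP[/eqP [-> ->] | /IH /andP[h1 h2]].
  by rewrite !inE !eqxx.
by rewrite !inE h1 h2 !orbT.
Qed.

Theorem mainTheorem4 (t s : nat) : 6 <= t -> 5 <= s ->
  toi_ge (dprod_adj (@K_adj (2 * t)) (@K_adj s)) (t * s).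
Proof.
move=> ht hs; exists (t * s); split => //.
have h2t : 0 < 2 * t by lia.
have hs0 : 0 < s by lia.
pose d : 'I_(2 * t) * 'I_s := (Ordinal h2t, Ordinal hs0).
pose nv (i : nat) := (i %/ s, i %% s).
have nvr : forall i : 'I_(t * s), [/\ (nv i).1 < t, (nv i).2 < s & inr t s (nv i)].
  move=> i; have hi := ltn_ord i.
  have h1 : i %/ s < t by rewrite ltn_divLR.
  have h2 : i %% s < s by rewrite ltn_pmod.
  by rewrite /inr /nv /=; split => //; apply/andP; split => //; lia.
have nvinj : forall i j : 'I_(t * s), nv i = nv j -> i = j.
  move=> i j [e1 e2]; apply: ord_inj; rewrite (divn_eq i s) (divn_eq j s) e1 e2 //.
have lexij : forall i j : 'I_(t * s), i < j ->
    ((nv i).1 < (nv j).1) || (((nv i).1 == (nv j).1) && ((nv i).2 < (nv j).2)).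
  move=> i j hij; rewrite /nv /=.
  have := leq_div2r s (ltnW hij); rewrite leq_eqVlt => /orP[/eqP e|->] //.
  rewrite e ltnn eqxx /=.
  have := divn_eq i s; have := divn_eq j s; rewrite e; lia.
have spec := fun (i j : 'I_(t * s)) (hij : i < j) =>
  @NP_spec t s (nv i).1 (nv i).2 (nv j).1 (nv j).2 (leq_trans (isT : 3 <= 6) ht) hs
    (let: And3 h _ _ := nvr i in h) (let: And3 h _ _ := nvr j in h) (let: And3 _ h _ := nvr i in h) (let: And3 _ h _ := nvr j in h) (lexij i j hij).
pose phi := fun i : 'I_(t * s) => toV d (nv i).
pose P := fun i j : 'I_(t * s) => map (toV d) (NP t s (nv i).1 (nv i).2 (nv j).1 (nv j).2).
have vnphi : forall i, vn (phi i) = nv i.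
  by move=> i; rewrite /phi vn_toV //; case: (nvr i).
have key : forall i j : 'I_(t * s), i < j -> forall e, e \in walk_edges (phi i) (P i j) ->
    (dec t s (vn e.1).1 (vn e.1).2 (vn e.2).1 (vn e.2).2 = ((nv i).1, (nv i).2, (nv j).1, (nv j).2)) /\
    (dec t s (vn e.2).1 (vn e.2).2 (vn e.1).1 (vn e.1).2 = ((nv i).1, (nv i).2, (nv j).1, (nv j).2)).
  move=> i j hij e; have [_ [_ [_ [_ [hr [_ hk]]]]]] := spec i j hij.
  rewrite /walk_edges /phi /P zip_map2 => /mapP[[[x1 y1] [x2 y2]] he0 ->].
  have /andP[m1 m2] := mem_zip2 he0.
  have r1 : inr t s (x1, y1).
    move: m1; rewrite inE => /orP[/eqP -> | m1]; first by case: (nvr i).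
    exact: (allP hr).
  have r2 : inr t s (x2, y2) by exact: (allP hr).
  have -> : vn (toV d (x1, y1)) = (x1, y1) by rewrite vn_toV.
  have -> : vn (toV d (x2, y2)) = (x2, y2) by rewrite vn_toV.
  by move: (allP hk _ he0); rewrite keyokE => /andP[/eqP -> /eqP ->].
exists phi, P; split; [|split].
- by move=> i j /(congr1 (@vn _ _)); rewrite !vnphi => /nvinj.
- move=> i j hij; have [hp [hu [hl [ho [hr [hint hk]]]]]] := spec i j hij.
  have hall : all (inr t s) (nv i :: NP t s (nv i).1 (nv i).2 (nv j).1 (nv j).2).
    by rewrite /= hr andbT; case: (nvr i).
  split.
  + rewrite /is_path; apply/andP; split.
      rewrite /phi /P path_map -(eq_in_path (P := inr t s) (e := nadj)) //.
      by move=> u v hu' hv' /=; rewrite adjE !vn_toV.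
    rewrite /phi /P -map_cons map_inj_in_uniq //.
    move=> u v hu' hv' /(congr1 (@vn _ _)); rewrite !vn_toV //; [exact: (allP hall) | exact: (allP hall)].
  + by rewrite /phi /P last_map hl.
  + by rewrite size_map.
  + move=> k; rewrite /interior /phi /P belast_map behead_map; apply/negP => /mapP[y hy].
    move/(congr1 (@vn _ _)); rewrite vn_toV; last by case: (nvr k).
    have yin : y \in nv i :: NP t s (nv i).1 (nv i).2 (nv j).1 (nv j).2 by apply/mem_belast/mem_behead.
    rewrite vn_toV; last exact: (allP hall).
    move=> ey; have := allP hint y hy; rewrite -ey; case: (nvr k); lia.
- move=> i j k l hij hkl hne; apply/allP => e he.
  have [k1 k2] := key i j hij e he.
  have fin : ((nv i).1, (nv i).2, (nv j).1, (nv j).2) = ((nv k).1, (nv k).2, (nv l).1, (nv l).2) -> False.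
    case=> e1 e2 e3 e4; move: hne.
    have -> : i = k by apply: nvinj; rewrite /nv; congr pair; [exact: e1 | exact: e2].
    have -> : j = l by apply: nvinj; rewrite /nv; congr pair; [exact: e3 | exact: e4].
    by rewrite eqxx.
  apply/andP; split; apply/negP => he'.
    have [k3 _] := key k l hkl _ he'; exact: fin (etrans (esym k1) k3).
  have [k3 _] := key k l hkl _ he'; exact: fin (etrans (esym k2) k3).
Qed.
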